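(* Let $c>0$ and let $\{\alpha_t\}_{t\ge1}$ be a sequence of nonnegative reals with $c\alpha_t/4\le1$ for all $t$. Consider the sequences defined by $$\theta_{t+1}=\theta_t+\alpha_t\frac{1}{1+\exp(c\theta_t)},\qquad \theta'_{t+1}=\theta'_t+\alpha_t\frac{1}{1+\exp(c\theta'_t)}.$$ If $\theta_1-\theta'_1\ge0$, then for every $t\ge1$, $$\theta_t-\theta'_t\ge(\theta_1-\theta'_1)\prod_{i=1}^{t-1}\Big(1-\frac{c\alpha_i}{4}\Big).$$ *)

(* Defs.v *)
From Stdlib Require Import Reals Lra.
Open Scope R_scope.

Fixpoint prod_from1 (f : nat -> R) (n : nat) : R :=
  match n with
  | O => 1
  | S m => prod_from1 f m * f (S m)
  end.

(* Main.v *)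
Require Import Defs.
From Stdlib Require Import Reals Lra Lia.
From Coquelicot Require Import Coquelicot.
Open Scope R_scope.

Lemma key (c x y : R) : 0 < c -> y <= x ->
  1 / (1 + exp (c * x)) - 1 / (1 + exp (c * y)) >= - (c / 4) * (x - y).
Proof.
  intros hc hxy.
  destruct (Req_dec x y) as [<-|hne]; [lra|].
  set (h := fun z => 1 / (1 + exp (c * z)) + c / 4 * z).
  set (h' := fun z => - (c * exp (c * z)) / (1 + exp (c * z))^2 + c / 4).
  assert (Hd : forall z, y <= z <= x -> derivable_pt_lim h z (h' z)).
  { intros z _. apply is_derive_Reals. unfold h, h'.
    assert (0 < exp (c*z)) by apply exp_pos.
    auto_derive.
    - lra.
    - field. lra. }
  destruct (MVT_cor2 h h' y x ltac:(lra) Hd) as [z [Hz _]].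
  assert (hpos : h' z >= 0).
  { unfold h'. assert (0 < exp (c*z)) by apply exp_pos.
    set (e := exp (c*z)) in *.
    assert (0 < (1+e)^2) by nra.
    assert (c * e / (1 + e)^2 <= c/4).
    { apply Rmult_le_reg_r with ((1+e)^2); auto.
      unfold Rdiv. rewrite Rmult_assoc, Rinv_l by lra. replace ((1+e)^2) with ((e-1)^2 + 4*e) by ring. assert (0 <= (e-1)^2) by (apply pow2_ge_0). assert (0 <= c * (e-1)^2) by (apply Rmult_le_pos; lra). lra. }
    unfold Rdiv in *. lra. }
  unfold h in Hz.
  assert (h' z * (x - y) >= 0) by (apply Rle_ge, Rmult_le_pos; lra).
  lra.
Qed.

Theorem lemmaA3 (c : R) (alpha theta theta' : nat -> R)
  (hc : 0 < c)
  (halpha_nonneg : forall t : nat, (1 <= t)%nat -> 0 <= alpha t)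
  (halpha_small : forall t : nat, (1 <= t)%nat -> c * alpha t / 4 <= 1)
  (htheta : forall t : nat, (1 <= t)%nat ->
     theta (S t) = theta t + alpha t * (1 / (1 + exp (c * theta t))))
  (htheta' : forall t : nat, (1 <= t)%nat ->
     theta' (S t) = theta' t + alpha t * (1 / (1 + exp (c * theta' t))))
  (hinit : 0 <= theta 1%nat - theta' 1%nat) :
  forall t : nat, (1 <= t)%nat ->
    theta t - theta' t >=
      (theta 1%nat - theta' 1%nat)
        * prod_from1 (fun i => 1 - c * alpha i / 4) (t - 1).
Proof.
  assert (H : forall n : nat,
    0 <= prod_from1 (fun i => 1 - c * alpha i / 4) n /\
    theta (S n) - theta' (S n) >=
      (theta 1%nat - theta' 1%nat) * prod_from1 (fun i => 1 - c * alpha i / 4) n).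
  { induction n as [|n [IH1 IH2]].
    - simpl. lra.
    - simpl prod_from1.
      assert (ha := halpha_nonneg (S n) ltac:(lia)).
      assert (hs := halpha_small (S n) ltac:(lia)).
      set (P := prod_from1 (fun i => 1 - c * alpha i / 4) n) in *.
      set (d := theta 1%nat - theta' 1%nat) in *.
      split.
      + apply Rmult_le_pos; lra.
      + rewrite (htheta (S n)), (htheta' (S n)) by lia.
        assert (hk := key c (theta (S n)) (theta' (S n)) hc ltac:(nra)).
        set (D := theta (S n) - theta' (S n)) in *.
        set (g1 := 1 / (1 + exp (c * theta (S n)))) in *.
        set (g2 := 1 / (1 + exp (c * theta' (S n)))) in *.
        assert (alpha (S n) * (g1 - g2) >= alpha (S n) * (- (c/4) * D)) by nra.
        assert (D * (1 - c * alpha (S n) / 4) >= d * P * (1 - c * alpha (S n) / 4)) by nra.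
        unfold D in *. nra. }
  intros t ht. destruct t as [|t]; [lia|].
  replace (S t - 1)%nat with t by lia. apply H.
Qed.
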